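(* Let $\mathbb D$ be a commutative ring with identity, and let $S\mathcal R=S\mathcal R(\mathbb D)$ be the S-Riordan group over $\mathbb D$. For $k\ge 1$ and $\alpha\in\mathbb D$ let $a_k(\alpha)=(1+\alpha t^k,\,t)\in S\mathcal R$. Then for every $\alpha\in\mathbb D$ and every integer $k\ge 2$, $a_k(\alpha)\in\gamma_2(S\mathcal R)$. Moreover, for every $n\ge 1$ and every $\alpha\in\mathbb D$ with $\alpha\neq 0$, the truncation of $a_1(\alpha)$ to $TS\mathcal R_n$ does not lie in $\gamma_2(TS\mathcal R_n)$.
   Context: For a commutative ring $\mathbb D$ with identity, the Riordan group $\mathcal R(\mathbb D)$ consists of pairs $(g,f)$ of formal power series $g=\sum_{k\ge0}g_kt^k$, $f=\sum_{k\ge1}f_kt^k$ in $\mathbb D[[t]]$ with $g_0,f_1$ units, identified with the infinite lower triangular matrices $(d_{n,k})_{n,k\ge0}$, $d_{n,k}=[t^n]g(t)f(t)^k$; the product is matrix multiplication, i.e. $(g_1,f_1)(g_2,f_2)=(g_1\cdot(g_2\circ f_1),\,f_2\circ f_1)$, with identity $(1,t)$. The S-Riordan group $S\mathcal R(\mathbb D)$ is the subgroup of pairs with $g_0=1$ and $f_1=1$ (all 1s on the main diagonal). For $n\ge0$, $TS\mathcal R_n$ denotes the group of $(n+1)\times(n+1)$ matrices $(d_{i,j})_{0\le i,j\le n}$ obtained by truncating the elements of $S\mathcal R(\mathbb D)$ (the image of the truncation homomorphism). Here $\gamma_2(G)$ denotes the commutator subgroup of $G$ (generated by commutators $[x,y]=x^{-1}y^{-1}xy$).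 *)

(* Defs.v *)
From HB Require Import structures.
From mathcomp Require Import all_boot all_order all_algebra.
Set Implicit Arguments. Unset Strict Implicit. Unset Printing Implicit Defensive.
Import GRing.Theory.
Local Open Scope ring_scope.

Section Riordan.
Variable R : comUnitRingType.

(* formal power series over R, as coefficient sequences *)
Definition ps := nat -> R.

Definition pmul (a b : ps) : ps := fun n => \sum_(i < n.+1) a i * b (n - i)%N.
Definition pone : ps := fun n => (n == 0%N)%:R.
Definition pt : ps := fun n => (n == 1%N)%:R.
Definition ppow (f : ps) (k : nat) : ps := iter k (pmul f) pone.
(* composition g o f (meaningful when f 0 = 0) *)
Definition pcomp (g f : ps) : ps := fun n => \sum_(k < n.+1) g k * ppow f k n.

Definition rpair := (ps * ps)%type.
Definition rmul (x y : rpair) : rpair := (pmul x.1 (pcomp y.1 x.2), pcomp y.2 x.2).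
Definition rid : rpair := (pone, pt).

Definition inSR (x : rpair) : Prop := x.1 0%N = 1 /\ x.2 0%N = 0 /\ x.2 1%N = 1.

Definition is_inv_SR (x xi : rpair) : Prop :=
  inSR xi /\ rmul x xi = rid /\ rmul xi x = rid.

Definition is_comm_SR (x y c : rpair) : Prop :=
  inSR x /\ inSR y /\
  exists xi yi, is_inv_SR x xi /\ is_inv_SR y yi /\
                c = rmul (rmul (rmul xi yi) x) y.

Definition in_gamma2_SR (a : rpair) : Prop :=
  exists (m : nat) (c : nat -> rpair),
    (forall i, (i < m)%N -> exists x y, is_comm_SR x y (c i)) /\
    a = foldr (fun i acc => rmul (c i) acc) rid (iota 0 m).

Definition a_elt (k : nat) (alpha : R) : rpair :=
  (fun m => (m == 0%N)%:R + (if m == k then alpha else 0), pt).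

Definition trunc (n : nat) (x : rpair) : 'M[R]_n.+1 :=
  \matrix_(i < n.+1, j < n.+1) pmul x.1 (ppow x.2 j) i.

Definition inTSR (n : nat) (M : 'M[R]_n.+1) : Prop :=
  exists x, inSR x /\ M = trunc n x.

Definition mxcomm (n : nat) (A B : 'M[R]_n.+1) : 'M[R]_n.+1 :=
  invmx A *m invmx B *m A *m B.

Definition in_gamma2_TSR (n : nat) (M : 'M[R]_n.+1) : Prop :=
  exists (m : nat) (xs ys : nat -> 'M[R]_n.+1),
    (forall i, (i < m)%N -> inTSR (xs i) /\ inTSR (ys i)) /\
    M = foldr (fun i acc => mxcomm (xs i) (ys i) *m acc) 1%:M (iota 0 m).

End Riordan.

(* Main.v *)
Require Import Defs.
From HB Require Import structures.
From mathcomp Require Import all_boot all_order all_algebra.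
From Stdlib Require Import FunctionalExtensionality.
From mathcomp Require Import zify ring.
Require Import Defs.
Set Implicit Arguments. Unset Strict Implicit. Unset Printing Implicit Defensive.
Import GRing.Theory.
Local Open Scope ring_scope.


Section Rep.
Variable R : comUnitRingType.
Implicit Types (a b g f : ps R) (P Q G F : {poly R}).

Definition rep n a P := forall i, (i <= n)%N -> a i = P`_i.
Definition eqm n P Q := forall i, (i <= n)%N -> P`_i = Q`_i.

Lemma rep_eqm n a P Q : rep n a P -> eqm n P Q -> rep n a Q.
Proof. by move=> h e i hi; rewrite h // e. Qed.
Lemma rep_eqm2 n a P Q : rep n a P -> rep n a Q -> eqm n P Q.
Proof. by move=> h e i hi; rewrite -h // -e. Qed.
Lemma eqm_refl n P : eqm n P P. Proof. by []. Qed.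
Lemma eqm_sym n P Q : eqm n P Q -> eqm n Q P.
Proof. by move=> h i hi; rewrite h. Qed.
Lemma eqm_trans n P Q S : eqm n P Q -> eqm n Q S -> eqm n P S.
Proof. by move=> h e i hi; rewrite h // e. Qed.
Lemma eqm_le n m P Q : (m <= n)%N -> eqm n P Q -> eqm m P Q.
Proof. by move=> hm h i hi; rewrite h // (leq_trans hi hm). Qed.
Lemma eqm_add n P Q P' Q' : eqm n P P' -> eqm n Q Q' -> eqm n (P + Q) (P' + Q').
Proof. by move=> h e i hi; rewrite !coefD h // e. Qed.
Lemma eqm_opp n P P' : eqm n P P' -> eqm n (- P) (- P').
Proof. by move=> h i hi; rewrite !coefN h. Qed.
Lemma eqm_scale n c P P' : eqm n P P' -> eqm n (c *: P) (c *: P').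
Proof. by move=> h i hi; rewrite !coefZ h. Qed.

Lemma rep_T n a : rep n a (\poly_(i < n.+1) a i).
Proof. by move=> i hi; rewrite coef_poly ltnS hi. Qed.
Lemma rep_P n P : rep n (fun i => P`_i) P.
Proof. by []. Qed.

Lemma rep_ext a b : (forall n, exists P, rep n a P /\ rep n b P) -> a = b.
Proof.
move=> h; apply: functional_extensionality => n.
by have [P [h1 h2]] := h n; rewrite h1 // h2.
Qed.

Lemma rep_mul n a b P Q : rep n a P -> rep n b Q -> rep n (pmul a b) (P * Q).
Proof.
move=> ha hb i hi; rewrite /pmul coefM; apply: eq_bigr => j _.
have hj : (j <= n)%N by apply: leq_trans hi; rewrite -ltnS.
by rewrite ha // hb // (leq_trans (leq_subr _ _) hi).
Qed.

Lemma rep_one n : rep n (pone R) 1.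
Proof. by move=> i _; rewrite /pone coefC; case: (i == 0)%N. Qed.
Lemma rep_t n : rep n (pt R) 'X.
Proof. by move=> i _; rewrite /pt coefX. Qed.

Lemma rep_pow n f F k : rep n f F -> rep n (ppow f k) (F ^+ k).
Proof.
move=> hf; elim: k => [|k IH]; first by rewrite expr0; exact: rep_one.
rewrite exprS /ppow iterS; exact: rep_mul.
Qed.

Lemma coef_pow_low F k i : F`_0 = 0 -> (i < k)%N -> (F ^+ k)`_i = 0.
Proof.
move=> F0; elim: k i => [//|k IH] i hi.
rewrite exprS coefM; apply: big1 => [[j hj]] _ /=.
case: j hj => [|j] hj; first by rewrite F0 mul0r.
by rewrite IH ?mulr0 //; lia.
Qed.

Lemma rep_comp n g f G F : rep n g G -> rep n f F -> F`_0 = 0 ->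
  rep n (pcomp g f) (G \Po F).
Proof.
move=> hg hf F0 i hi; rewrite /pcomp coef_comp_poly.
set N := maxn (size G) i.+1.
rewrite (big_ord_widen N (fun k => g k * ppow f k i)) ?leq_maxr //.
rewrite (big_ord_widen N (fun k => G`_k * (F ^+ k)`_i)) ?leq_maxl //.
rewrite big_mkcond [RHS]big_mkcond /=; apply: eq_bigr => -[k hk] _ /=.

case: (ltnP k i.+1) => hki.
  have hkn : (k <= n)%N by apply: leq_trans hi; rewrite -ltnS.
  rewrite hg // (rep_pow k hf) //.
  by case: ltnP => // hs; rewrite nth_default ?mul0r.
by rewrite coef_pow_low ?mulr0 ?if_same.
Qed.

Lemma eqm_mul n P Q P' Q' : eqm n P P' -> eqm n Q Q' -> eqm n (P * Q) (P' * Q').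
Proof.
move=> h e; apply: (@rep_eqm2 _ (pmul (fun i => P`_i) (fun i => Q`_i))).
  exact: rep_mul.
by apply: rep_mul; [apply: rep_eqm h|apply: rep_eqm e].
Qed.

Lemma eqm_pow n P P' k : eqm n P P' -> eqm n (P ^+ k) (P' ^+ k).
Proof.
move=> h; elim: k => [|k IH]; first by rewrite !expr0.
by rewrite !exprS; apply: eqm_mul.
Qed.

Lemma eqm_comp n G G' F F' : eqm n G G' -> eqm n F F' -> F`_0 = 0 -> F'`_0 = 0 ->
  eqm n (G \Po F) (G' \Po F').
Proof.
move=> h e F0 F'0; apply: (@rep_eqm2 _ (pcomp (fun i => G`_i) (fun i => F`_i))).
  exact: rep_comp.
apply: rep_comp => //; by [apply: rep_eqm h|apply: rep_eqm e].
Qed.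

Lemma comp0 G F : F`_0 = 0 -> (G \Po F)`_0 = G`_0.
Proof.
move=> F0; rewrite -(@rep_comp 0 (fun i => G`_i) (fun i => F`_i)) //.
by rewrite /pcomp big_ord1 /ppow /= /pone /= mulr1.
Qed.

Lemma mul_contract j A B C D : eqm j A B -> eqm j C D ->
  A`_0 = 0 -> B`_0 = 0 -> C`_0 = 0 -> D`_0 = 0 -> eqm j.+1 (A * C) (B * D).
Proof.
move=> hAB hCD A0 B0 C0 D0 i hi; rewrite !coefM; apply: eq_bigr => -[l hl] _ /=.
case: l hl => [|l] hl; first by rewrite A0 B0 !mul0r.
case: (ltnP l j) => hlj.
  by rewrite hAB // hCD //; lia.
have -> : (i - l.+1 = 0)%N by lia.
by rewrite C0 D0 !mulr0.
Qed.

Lemma compXn F m : 'X^m \Po F = F ^+ m.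
Proof.
elim: m => [|m IH]; first by rewrite !expr0 -polyC1 comp_polyC.
by rewrite !exprS comp_polyM comp_polyX IH.
Qed.

Lemma rep_rmul n (x y : rpair R) G1 F1 G2 F2 : rep n x.1 G1 -> rep n x.2 F1 ->
  rep n y.1 G2 -> rep n y.2 F2 -> F1`_0 = 0 ->
  rep n (rmul x y).1 (G1 * (G2 \Po F1)) /\ rep n (rmul x y).2 (F2 \Po F1).
Proof.
move=> h1 h2 h3 h4 h5; split; rewrite /rmul /=; last exact: rep_comp.
by apply: rep_mul => //; apply: rep_comp.
Qed.

Lemma pair_ext (x y : rpair R) : (forall n, exists G F G' F', rep n x.1 G /\ rep n x.2 F /\
  rep n y.1 G' /\ rep n y.2 F' /\ eqm n G G' /\ eqm n F F') -> x = y.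
Proof.
move=> h; case: x h => x1 x2; case: y => y1 y2 h /=; congr pair; apply: rep_ext => n;
have [G [F [G' [F' [h1 [h2 [h3 [h4 [e1 e2]]]]]]]]] := h n.
  by exists G'; split => //; apply: rep_eqm e1.
by exists F'; split => //; apply: rep_eqm e2.
Qed.
End Rep.



Section Part1.
Variable R : comUnitRingType.
Variable alpha : R.
Variable k' : nat.
Implicit Types (F G A B : {poly R}).

Definition Zf F := F ^+ k' * (1 + F).
Definition Qf F := F * (F * Zf F).
Definition Phi F := 'X - alpha *: Qf F.
Definition Pp := 'X + alpha *: Qf 'X.
Definition Fs m := iter m Phi 0.
Definition fser : ps R := fun i => (Fs i)`_i.
Definition pser : ps R := fun i => Pp`_i.

Lemma Qf0 F : F`_0 = 0 -> (Qf F)`_0 = 0.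
Proof. by move=> h; rewrite /Qf coef0M h mul0r. Qed.

Lemma Qcontract j A B : eqm j A B -> A`_0 = 0 -> B`_0 = 0 -> eqm j.+1 (Qf A) (Qf B).
Proof.
move=> h A0 B0; apply: mul_contract => //; last by rewrite coef0M B0 mul0r.
  apply: eqm_mul => //; apply: eqm_mul; first exact: eqm_pow.
  by apply: eqm_add.
by rewrite coef0M A0 mul0r.
Qed.

Lemma Phi0 F : F`_0 = 0 -> (Phi F)`_0 = 0.
Proof. by move=> h; rewrite /Phi coefB coefZ Qf0 // coefX mulr0 subr0. Qed.

Lemma Fs0 m : (Fs m)`_0 = 0.
Proof. by elim: m => [|m IH]; rewrite ?coef0 // /Fs iterS Phi0. Qed.

Lemma Phi_contract j A B : eqm j A B -> A`_0 = 0 -> B`_0 = 0 -> eqm j.+1 (Phi A) (Phi B).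
Proof.
move=> h A0 B0; apply: eqm_add => //; apply: eqm_opp; apply: eqm_scale.
exact: Qcontract.
Qed.

Lemma Fs_step j : eqm j (Fs j) (Fs j.+1).
Proof.
elim: j => [|j IH].
  by move=> i; rewrite leqn0 => /eqP ->; rewrite !Fs0.
exact: (Phi_contract IH (Fs0 _) (Fs0 _)).
Qed.

Lemma Fs_stab j d : eqm j (Fs j) (Fs (j + d)).
Proof.
elim: d => [|d IH]; first by rewrite addn0.
apply: eqm_trans IH _; rewrite addnS; apply: (@eqm_le _ (j + d)); last exact: Fs_step.
exact: leq_addr.
Qed.

Lemma rep_f n : rep n fser (Fs n).
Proof.
move=> i hi; rewrite /fser (Fs_stab (n - i)) //.
by rewrite subnKC.
Qed.

Lemma QfX F : Qf 'X \Po F = Qf F.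
Proof.
by rewrite /Qf /Zf !comp_polyM comp_polyX compXn comp_polyD -polyC1 comp_polyC comp_polyX.
Qed.

Lemma PcompF F : Pp \Po F = F + alpha *: Qf F.
Proof. by rewrite /Pp comp_polyD comp_polyX comp_polyZ QfX. Qed.

Lemma Pp0 : Pp`_0 = 0.
Proof. by rewrite /Pp coefD coefX coefZ Qf0 ?coefX // mulr0 addr0. Qed.

Lemma Pp1 : Pp`_1 = 1.
Proof.
rewrite /Pp coefD coefX coefZ /Qf /Zf !coefXM /=.
by rewrite mulr0 addr0.
Qed.

Lemma Pfs n : eqm n (Pp \Po Fs n) 'X.
Proof.
have e : Pp \Po Fs n = Fs n - Fs n.+1 + 'X.
  have -> : Fs n.+1 = Phi (Fs n) by [].
  rewrite PcompF /Phi; ring.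
rewrite e; apply: (@eqm_trans _ n _ (Fs n - Fs n + 'X)).
  apply: eqm_add => //; apply: eqm_add => //; apply: eqm_opp.
  apply: eqm_sym; exact: Fs_step.
by rewrite subrr add0r.
Qed.

Lemma Fsp n : eqm n (Fs n \Po Pp) 'X.
Proof.
set H := Fs n \Po Pp.
have H0 : H`_0 = 0 by rewrite /H comp0 ?Pp0 ?Fs0.
have hP : eqm n (Pp \Po H) Pp.
  rewrite /H comp_polyA -{3}(comp_polyX Pp); apply: eqm_comp => //; last exact: Pp0.
    exact: Pfs.
  exact: Pp0.
suff : forall j, (j <= n)%N -> eqm j H 'X by move=> h; apply: h.
elim => [_|j IH hj].
  by move=> i; rewrite leqn0 => /eqP ->; rewrite H0 coefX.
have -> : H = Pp \Po H - alpha *: Qf H by rewrite PcompF; ring.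
have -> : 'X = Pp - alpha *: Qf 'X :> {poly R} by rewrite /Pp; ring.
apply: eqm_add; first exact: eqm_le hP.
apply: eqm_opp; apply: eqm_scale; apply: Qcontract => //; last by rewrite coefX.
by apply: IH; apply: ltnW.
Qed.
End Part1.



Section Main1.
Variable R : comUnitRingType.

Definition gs : ps R := fun i => (1 + 'X : {poly R})`_i.
Definition ginv : ps R := fun i => (-1) ^+ i.
Definition Tg n : {poly R} := \poly_(i < n.+1) ginv i.

Lemma Tg_inv n : eqm n ((1 + 'X) * Tg n) 1.
Proof.
move=> i hi; rewrite mulrDl mul1r coefD coefXM coefC /Tg !coef_poly ltnS hi.
case: i hi => [|i] hi /=; first by rewrite /ginv expr0 addr0.
by rewrite ltnS (ltnW hi) /ginv exprS mulN1r addNr.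
Qed.

Lemma rep_Xc0 : ('X : {poly R})`_0 = 0. Proof. by rewrite coefX. Qed.
Lemma comp1 F : (1 : {poly R}) \Po F = 1.
Proof. by rewrite -polyC1 comp_polyC. Qed.

Lemma rep_a n (alpha : R) k : rep n (a_elt k alpha).1 (1 + alpha *: 'X^k).
Proof.
move=> i _; rewrite /a_elt /= coefD coefC coefZ coefXn.
by case: (i == 0)%N; case: (i == k); rewrite ?mulr1 ?mulr0.
Qed.

Lemma part1 (alpha : R) k' : in_gamma2_SR (a_elt k'.+2 alpha).
Proof.
set x := (gs, pt R); set xi := (ginv, pt R).
set y := (pone R, fser alpha k'); set yi := (pone R, pser alpha k').
set c := rmul (rmul (rmul xi yi) x) y.
have Fs1 : fser alpha k' 1 = 1.
  by rewrite /fser /= /Phi coefB coefX coefZ /Qf !mul0r coef0 mulr0 subr0.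
have Fs00 : fser alpha k' 0 = 0 by rewrite /fser Fs0.
exists 1%N, (fun _ => c); split; last first.
  rewrite /= ; apply: pair_ext => n.
  set P := Pp alpha k'; set Fn := Fs alpha k' n.
  have [r1 r1'] := @rep_rmul _ n xi yi _ _ _ _ (@rep_T _ n ginv) (@rep_t _ n) (@rep_one _ n) (@rep_P _ n P) rep_Xc0.
  have P0 : (P \Po 'X)`_0 = 0 by rewrite comp_polyXr Pp0.
  have [r2 r2'] := @rep_rmul _ n (rmul xi yi) x _ _ _ _ r1 r1' (@rep_P _ n (1+'X)) (@rep_t _ n) P0.
  have P1 : ('X \Po (P \Po 'X))`_0 = 0 by rewrite comp_polyX.
  have [r3 r3'] := @rep_rmul _ n (rmul (rmul xi yi) x) y _ _ _ _ r2 r2' (@rep_one _ n) (@rep_f _ alpha k' n) P1.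
  have P2 : (Fn \Po ('X \Po (P \Po 'X)))`_0 = 0 by rewrite comp0 // /Fn Fs0.
  have [r4 r4'] := @rep_rmul _ n c (rid R) _ _ _ _ r3 r3' (@rep_one _ n) (@rep_t _ n) P2.
  exists (1 + alpha *: 'X^(k'.+2)), 'X; eexists; eexists.
  split; first exact: rep_a.
  split; first exact: rep_t.
  split; first exact: r4.
  split; first exact: r4'.
  rewrite !comp_polyXr !comp_polyX !comp1 !mulr1 comp_polyD comp1 comp_polyX.
  split; last by apply: eqm_sym; apply: Fsp.
  have -> : Tg n * (1 + P) = ((1 + 'X) * Tg n) * (1 + alpha *: 'X^(k'.+2)).
    by rewrite /P /Pp /Qf /Zf -!mul_polyC !exprS; ring.
  apply: eqm_sym; rewrite -[X in eqm _ _ X]mul1r; apply: eqm_mul => //; exact: Tg_inv.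
move=> i _; exists x, y; split.
  by rewrite /inSR /x /gs /= coefD coefC coefX addr0.
split; first by [].
exists xi, yi; split.
  split; first by [].
  split; apply: pair_ext => n.
    exists ((1 + 'X) * (Tg n \Po 'X)), ('X \Po 'X), 1, 'X.
    have [h1 h2] := @rep_rmul _ n x xi _ _ _ _ (@rep_P _ n (1+'X)) (@rep_t _ n) (@rep_T _ n ginv) (@rep_t _ n) rep_Xc0.
    do 2! split => //; split; first exact: rep_one.
    split; first exact: rep_t.
    by rewrite comp_polyXr comp_polyX; split => //; apply: Tg_inv.
  exists (Tg n * ((1 + 'X) \Po 'X)), ('X \Po 'X), 1, 'X.
  have [h1 h2] := @rep_rmul _ n xi x _ _ _ _ (@rep_T _ n ginv) (@rep_t _ n) (@rep_P _ n (1+'X)) (@rep_t _ n) rep_Xc0.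
  do 2! split => //; split; first exact: rep_one.
  split; first exact: rep_t.
  by rewrite comp_polyXr comp_polyX mulrC; split => //; apply: Tg_inv.
split.
  split; first by rewrite /inSR /= /pone /pser Pp0 Pp1.
  split; apply: pair_ext => n.
    exists (1 * (1 \Po Fs alpha k' n)), (Pp alpha k' \Po Fs alpha k' n), 1, 'X.
    have [h1 h2] := @rep_rmul _ n y yi _ _ _ _ (@rep_one _ n) (@rep_f _ alpha k' n) (@rep_one _ n) (@rep_P _ n (Pp alpha k')) (@Fs0 _ alpha k' n).
    do 2! split => //; split; first exact: rep_one.
    split; first exact: rep_t.
    by rewrite comp1 mulr1; split => //; apply: Pfs.
  exists (1 * (1 \Po Pp alpha k')), (Fs alpha k' n \Po Pp alpha k'), 1, 'X.
  have [h1 h2] := @rep_rmul _ n yi y _ _ _ _ (@rep_one _ n) (@rep_P _ n (Pp alpha k')) (@rep_one _ n) (@rep_f _ alpha k' n) (@Pp0 _ alpha k').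
  do 2! split => //; split; first exact: rep_one.
  split; first exact: rep_t.
  by rewrite comp1 mulr1; split => //; apply: Fsp.
by [].
Qed.
End Main1.



Section Part2.
Variable R : comUnitRingType.
Implicit Types (g f h : ps R).

Lemma ppow_low f j i : f 0%N = 0 -> (i < j)%N -> ppow f j i = 0.
Proof.
move=> f0 hij; rewrite (@rep_pow _ i f (\poly_(l < i.+1) f l) j (rep_T f)) //.
by rewrite coef_pow_low // coef_poly.
Qed.

Lemma ppow_diag f j : f 0%N = 0 -> f 1%N = 1 -> ppow f j j = 1.
Proof.
move=> f0 f1; elim: j => [|j IH]; first by rewrite /ppow /= /pone.
rewrite /ppow iterS -/(ppow f j) /pmul big_ord_recl /= f0 mul0r add0r.
rewrite big_ord_recl /= /bump /= f1 mul1r subSS subn0 IH big1 ?addr0 // => l _.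
by rewrite ppow_low ?mulr0 //; have := ltn_ord l; lia.
Qed.

Lemma pmul_low g h j i : (forall m, (m < j)%N -> h m = 0) -> (i < j)%N -> pmul g h i = 0.
Proof.
move=> hl hij; rewrite /pmul big1 // => l _; rewrite hl ?mulr0 //; lia.
Qed.

Lemma pmul_diag g h j : (forall m, (m < j)%N -> h m = 0) -> pmul g h j = g 0%N * h j.
Proof.
move=> hl; rewrite /pmul big_ord_recl subn0 big1 ?addr0 // => l _.
by rewrite hl ?mulr0 // lift0; have := ltn_ord l; lia.
Qed.

Variable n' : nat.
Local Notation N := n'.+2.
Definition i0 : 'I_N := ord0.
Definition i1 : 'I_N := @Ordinal N 1 isT.

Definition SS (A : 'M[R]_N) := row i0 A = row i0 1%:M /\
  row i1 A = A i1 i0 *: row i0 1%:M + row i1 1%:M.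

Lemma SS_mul A B : SS A -> SS B -> SS (A *m B) /\ (A *m B) i1 i0 = A i1 i0 + B i1 i0.
Proof.
move=> [hA0 hA1] [hB0 hB1].
have r0 : row i0 (A *m B) = row i0 1%:M by rewrite row_mul hA0 -row_mul mul1mx.
have r1 : row i1 (A *m B) = (A i1 i0 + B i1 i0) *: row i0 1%:M + row i1 1%:M.
  rewrite row_mul hA1 mulmxDl -scalemxAl -!row_mul !mul1mx hB0 hB1.
  by rewrite addrA scalerDl.
have e : (A *m B) i1 i0 = A i1 i0 + B i1 i0.
  have := congr1 (fun v : 'rV_N => v 0 i0) r1.
  by rewrite !mxE eqxx mulr1 (_ : (i1 == i0) = false) // addr0.
by rewrite /SS e.
Qed.

Lemma SS_inv A : A \in unitmx -> SS A -> SS (invmx A) /\ (invmx A) i1 i0 = - A i1 i0.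
Proof.
move=> hU [hA0 hA1].
have hAB := mulmxV hU.
have r0 : row i0 (invmx A) = row i0 1%:M.
  by rewrite -[RHS](congr1 (row i0) hAB) row_mul hA0 -row_mul mul1mx.
have r1 : row i1 (invmx A) = (- A i1 i0) *: row i0 1%:M + row i1 1%:M.
  have := congr1 (row i1) hAB; rewrite row_mul hA1 mulmxDl -scalemxAl -!row_mul !mul1mx r0.
  by move=> <-; rewrite addrA scaleNr addNr add0r.
have e : (invmx A) i1 i0 = - A i1 i0.
  have := congr1 (fun v : 'rV_N => v 0 i0) r1.
  by rewrite !mxE eqxx mulr1 (_ : (i1 == i0) = false) // addr0.
by rewrite /SS e.
Qed.

Lemma SS_comm A B : A \in unitmx -> B \in unitmx -> SS A -> SS B ->
  SS (mxcomm A B) /\ (mxcomm A B) i1 i0 = 0.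
Proof.
move=> uA uB sA sB.
have [sAi eA] := SS_inv uA sA; have [sBi eB] := SS_inv uB sB.
have [s1 e1] := SS_mul sAi sBi.
have [s2 e2] := SS_mul s1 sA.
have [s3 e3] := SS_mul s2 sB.
split; first exact: s3.
by rewrite /mxcomm e3 e2 e1 eA eB; ring.
Qed.

Lemma SS_one : SS 1%:M /\ (1%:M : 'M[R]_N) i1 i0 = 0.
Proof.
have e : (1%:M : 'M[R]_N) i1 i0 = 0 by rewrite mxE (_ : (i1 == i0) = false).
by rewrite /SS e scale0r add0r.
Qed.

Lemma trunc_low (x : rpair R) (i j : 'I_N) : inSR x -> (i < j)%N -> trunc n'.+1 x i j = 0.
Proof.
move=> [g0 [f0 f1]] hij; rewrite /trunc mxE; apply: (@pmul_low _ _ j) => // m hm.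
exact: ppow_low.
Qed.

Lemma trunc_diag (x : rpair R) (i : 'I_N) : inSR x -> trunc n'.+1 x i i = 1.
Proof.
move=> [g0 [f0 f1]]; rewrite /trunc mxE (@pmul_diag _ _ i) ?g0 ?ppow_diag ?mul1r //.
by move=> m hm; apply: ppow_low.
Qed.

Lemma trunc_props (x : rpair R) : inSR x ->
  [/\ SS (trunc n'.+1 x), trunc n'.+1 x i1 i0 = x.1 1%N & trunc n'.+1 x \in unitmx].
Proof.
move=> hx; have hx' := hx; move: hx' => [g0 [f0 f1]].
have e10 : trunc n'.+1 x i1 i0 = x.1 1%N.
  rewrite /trunc mxE /pmul !big_ord_recl big_ord0 /= /ppow /= /pone /=.
  by rewrite mulr0 add0r mulr1 addr0.
have hl := fun i j => @trunc_low x i j hx.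
have hd := fun i => @trunc_diag x i hx.
move: (trunc n'.+1 x) hl hd e10 => T hl hd e10.
split => //.
- split; apply/rowP => j; rewrite !mxE.
    case: j => [[|j] hj].
      by rewrite (_ : Ordinal hj = i0) ?hd ?eqxx //; apply: val_inj.
    by rewrite hl.
  case: j => [[|[|j]] hj].
  + by rewrite (_ : Ordinal hj = i0) ?e10 ?eqxx ?mulr1 ?addr0 //; apply: val_inj.
  + by rewrite (_ : Ordinal hj = i1) ?hd ?eqxx ?mulr0 ?add0r //; apply: val_inj.
  + by rewrite hl // mulr0 add0r.
- rewrite unitmxE det_trig; last first.
    by apply/is_trig_mxP => i j hij; apply: hl.
  by rewrite big1 ?unitr1 // => i _; apply: hd.
Qed.
End Part2.

Lemma part2 (R : comUnitRingType) (n : nat) (alpha : R) : (1 <= n)%N -> alpha != 0 ->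
  ~ in_gamma2_TSR (trunc n (a_elt 1 alpha)).
Proof.
case: n => [//|n'] _ ha [m [xs [ys [hxy hM]]]].
have key : forall l : seq nat, (forall i, i \in l -> (i < m)%N) ->
   SS (foldr (fun i acc => mxcomm (xs i) (ys i) *m acc) 1%:M l) /\
   (foldr (fun i acc => mxcomm (xs i) (ys i) *m acc) 1%:M l) (i1 n') (i0 n') = 0.
  elim => [|a l IH] hl /=; first exact: SS_one.
  have [[x [hx ->]] [y [hy ->]]] := hxy a (hl a (mem_head _ _)).
  have [sx _ ux] := trunc_props n' hx; have [sy _ uy] := trunc_props n' hy.
  have [sc ec] := SS_comm ux uy sx sy.
  have [sl el] : _ /\ _ := IH (fun i hi => hl i (@mem_behead _ (a :: l) i hi)).
  have [s e] := SS_mul sc sl.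
  by rewrite e ec el addr0.
have [_ e] := key (iota 0 m) (fun i hi => ltac:(by move: hi; rewrite mem_iota add0n)).
have hin : inSR (a_elt 1 alpha) by rewrite /inSR /= /pt /= addr0.
have [_ e' _] := trunc_props n' hin.
move: e; rewrite -hM e' /a_elt /= add0r => h.
by move/eqP: ha.
Qed.


Unset Implicit Arguments.
Theorem lemma1 (R : comUnitRingType) :
  (forall (alpha : R) (k : nat), (2 <= k)%N -> in_gamma2_SR (a_elt k alpha)) /\
  (forall (n : nat) (alpha : R), (1 <= n)%N -> alpha != 0 ->
     ~ in_gamma2_TSR (trunc n (a_elt 1 alpha))).
Proof.
split.
  move=> alpha [|[|k']] // _; exact: part1.
move=> n alpha hn ha; exact: part2.
Qed.
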